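(* Let $n=2$ and let $I_1,I_2$ be independent Bernoulli random variables with $\Pr[I_i=1]=p_i\in(0,1)$, $q_i=1-p_i$, and set $I_3=(1-I_1)(1-I_2)$. For positive reals $\pi_1,\pi_2,\pi_3>0$ consider the Tavin scheme with active administrator, with compensations $$W_i=(\pi_1+\pi_2+\pi_3)\,\frac{\pi_iI_i}{\pi_1I_1+\pi_2I_2+\pi_3I_3},\qquad i=1,2,3.$$ Then $E[W_i]=\pi_i$ for $i=1,2,3$ if and only if $$\pi_1=\pi_3\,\frac{p_1}{q_1}\,\frac{1-q_1q_2}{p_1q_2+p_2q_1},\qquad \pi_2=\pi_3\,\frac{p_2}{q_2}\,\frac{1-q_1q_2}{p_1q_2+p_2q_1}.$$ In particular, the set of positive investment vectors making this scheme actuarially fair for all three agents is exactly the set of vectors of this form with $\pi_3>0$ arbitrary.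
   Context: Note that $\pi_1I_1+\pi_2I_2+\pi_3I_3>0$ always, since $I_3=1$ exactly when $I_1=I_2=0$. *)

(* Defs.v *)
From mathcomp Require Import all_boot all_order all_algebra.
Set Implicit Arguments. Unset Strict Implicit. Unset Printing Implicit Defensive.
Import Order.TTheory GRing.Theory Num.Theory.
Local Open Scope ring_scope.

(* Sample space: outcomes (I_1, I_2) in {0,1}^2, encoded as bool * bool. *)
Definition Omega := (bool * bool)%type.

Definition ind (R : ringType) (b : bool) : R := if b then 1 else 0.

Definition bern2 (R : ringType) (p1 p2 : R) (w : Omega) : R :=
  (if w.1 then p1 else 1 - p1) * (if w.2 then p2 else 1 - p2).

Definition I1 (R : ringType) (w : Omega) : R := ind R w.1.
Definition I2 (R : ringType) (w : Omega) : R := ind R w.2.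
Definition I3 (R : ringType) (w : Omega) : R := (1 - I1 R w) * (1 - I2 R w).

Definition Ebern (R : ringType) (p1 p2 : R) (X : Omega -> R) : R :=
  \sum_(w : Omega) bern2 p1 p2 w * X w.

Definition denom (R : fieldType) (pi1 pi2 pi3 : R) (w : Omega) : R :=
  pi1 * I1 R w + pi2 * I2 R w + pi3 * I3 R w.

Definition W1 (R : fieldType) (pi1 pi2 pi3 : R) (w : Omega) : R :=
  (pi1 + pi2 + pi3) * (pi1 * I1 R w / denom pi1 pi2 pi3 w).
Definition W2 (R : fieldType) (pi1 pi2 pi3 : R) (w : Omega) : R :=
  (pi1 + pi2 + pi3) * (pi2 * I2 R w / denom pi1 pi2 pi3 w).
Definition W3 (R : fieldType) (pi1 pi2 pi3 : R) (w : Omega) : R :=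
  (pi1 + pi2 + pi3) * (pi3 * I3 R w / denom pi1 pi2 pi3 w).

Definition fair (R : fieldType) (p1 p2 pi1 pi2 pi3 : R) : Prop :=
  [/\ Ebern p1 p2 (W1 pi1 pi2 pi3) = pi1,
      Ebern p1 p2 (W2 pi1 pi2 pi3) = pi2 &
      Ebern p1 p2 (W3 pi1 pi2 pi3) = pi3].

(* Main.v *)
Require Import Defs.
From mathcomp Require Import all_boot all_order all_algebra ring lra.
Import Order.TTheory GRing.Theory Num.Theory.
Local Open Scope ring_scope.
Lemma Eexp (R : fieldType) (p1 p2 : R) X : Ebern p1 p2 X =
  p1 * p2 * X (true,true) + p1 * (1-p2) * X(true,false) + (1-p1) * p2 * X(false,true) + (1-p1) * (1-p2) * X(false,false).
Proof.
rewrite /Ebern (eq_bigr (fun w : bool * bool => bern2 p1 p2 (w.1,w.2) * X (w.1,w.2))); last by case.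
rewrite -(pair_bigA _ (fun a b => bern2 p1 p2 (a,b) * X (a,b))) /=.
rewrite !big_bool /= /bern2 /=. ring.
Qed.
Lemma E1 (R : fieldType) (p1 p2 a b c: R) : a != 0 -> b != 0 -> c != 0 ->
  Ebern p1 p2 (W1 a b c) = (a+b+c) * (p1 * p2 * (a/(a+b)) + p1 * (1-p2)).
Proof. move=> ha hb hc.
rewrite Eexp /W1 /denom /I1 /I2 /I3 /ind /=.
rewrite !(mulr0,mulr1,subrr,addr0,add0r,subr0,mul0r,divff ha,mul1r,mulr1).
ring.
Qed.
Lemma E2 (R : fieldType) (p1 p2 a b c: R) : a != 0 -> b != 0 -> c != 0 ->
  Ebern p1 p2 (W2 a b c) = (a+b+c) * (p1 * p2 * (b/(a+b)) + (1-p1) * p2).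
Proof. move=> ha hb hc.
rewrite Eexp /W2 /denom /I1 /I2 /I3 /ind /=.
rewrite !(mulr0,mulr1,subrr,addr0,add0r,subr0,mul0r,divff hb,mul1r,mulr1).
ring.
Qed.
Lemma E3 (R : fieldType) (p1 p2 a b c: R) : a != 0 -> b != 0 -> c != 0 ->
  Ebern p1 p2 (W3 a b c) = (a+b+c) * ((1-p1) * (1-p2)).
Proof. move=> ha hb hc.
rewrite Eexp /W3 /denom /I1 /I2 /I3 /ind /=.
rewrite !(mulr0,mulr1,subrr,addr0,add0r,subr0,mul0r,divff hc,mul1r,mulr1).
ring.
Qed.

Lemma core (R : realFieldType) (p1 p2 : R)
  (hp1 : 0 < p1 < 1) (hp2 : 0 < p2 < 1) pi1 pi2 pi3 :
  0 < pi1 -> 0 < pi2 -> 0 < pi3 ->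
  let q1 := 1 - p1 in let q2 := 1 - p2 in
     (fair p1 p2 pi1 pi2 pi3 <->
      (pi1 = pi3 * (p1 / q1) * ((1 - q1 * q2) / (p1 * q2 + p2 * q1)) /\
       pi2 = pi3 * (p2 / q2) * ((1 - q1 * q2) / (p1 * q2 + p2 * q1)))).
Proof.
move=> h1 h2 h3 q1 q2.
case/andP: hp1 => a1 b1; case/andP: hp2 => a2 b2.
have q1p : 0 < q1 by rewrite /q1; lra.
have q2p : 0 < q2 by rewrite /q2; lra.
have Dp : 0 < p1 * q2 + p2 * q1 by nra.
have Kp : 0 < 1 - q1 * q2 by rewrite /q1 /q2; nra.
have q1n : q1 != 0 by rewrite gt_eqF.
have q2n : q2 != 0 by rewrite gt_eqF.
have Dn : p1 * q2 + p2 * q1 != 0 by rewrite gt_eqF.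
have Kn : 1 - q1 * q2 != 0 by rewrite gt_eqF.
have n1 : pi1 != 0 by rewrite gt_eqF.
have n2 : pi2 != 0 by rewrite gt_eqF.
have n3 : pi3 != 0 by rewrite gt_eqF.
have n12 : pi1 + pi2 != 0 by rewrite gt_eqF //; lra.
have Sn : pi1 + pi2 + pi3 != 0 by rewrite gt_eqF //; lra.
rewrite /fair E1 // E2 // E3 // -/q1 -/q2.
set S := pi1 + pi2 + pi3.
split.
- case=> e1 e2 e3.
  have hS : pi1 + pi2 = S * (1 - q1 * q2) by rewrite mulrBr mulr1 e3 /S; ring.
  have e1p : pi1 * (pi1 + pi2) = S * p1 * p2 * pi1 + S * p1 * q2 * (pi1+pi2).
    by rewrite -{1}e1; rewrite /q2; (field; rewrite ?q1n ?q2n ?Dn ?Kn ?n1 ?n2 ?n3 ?n12 ?Sn ?andbT //).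
  have e2p : pi2 * (pi1 + pi2) = S * p1 * p2 * pi2 + S * q1 * p2 * (pi1+pi2).
    by rewrite -{1}e2; rewrite /q1; (field; rewrite ?q1n ?q2n ?Dn ?Kn ?n1 ?n2 ?n3 ?n12 ?Sn ?andbT //).
  rewrite hS in e1p e2p.
  have k1 : S * (pi1 * (p1 * q2 + p2 * q1) - S * p1 * q2 * (1-q1 * q2)) = 0.
    have -> : S * (pi1 * (p1 * q2 + p2 * q1) - S * p1 * q2 * (1-q1 * q2)) =
      pi1 * (S * (1 - q1 * q2)) - (S * p1 * p2 * pi1 + S * p1 * q2 * (S * (1 - q1 * q2))).
      by rewrite /q1 /q2; ring.
    by rewrite e1p subrr.
  have k2 : S * (pi2 * (p1 * q2 + p2 * q1) - S * q1 * p2 * (1-q1 * q2)) = 0.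
    have -> : S * (pi2 * (p1 * q2 + p2 * q1) - S * q1 * p2 * (1-q1 * q2)) =
      pi2 * (S * (1 - q1 * q2)) - (S * p1 * p2 * pi2 + S * q1 * p2 * (S * (1 - q1 * q2))).
      by rewrite /q1 /q2; ring.
    by rewrite e2p subrr.
  move/eqP: k1; rewrite mulf_eq0 (negbTE Sn) /= subr_eq0 => /eqP k1.
  move/eqP: k2; rewrite mulf_eq0 (negbTE Sn) /= subr_eq0 => /eqP k2.
  rewrite -e3; split.
  + transitivity (pi1 * (p1 * q2 + p2 * q1) / (p1 * q2 + p2 * q1)); first by (field; rewrite ?q1n ?q2n ?Dn ?Kn ?n1 ?n2 ?n3 ?n12 ?Sn ?andbT //).
    rewrite k1; (field; rewrite ?q1n ?q2n ?Dn ?Kn ?n1 ?n2 ?n3 ?n12 ?Sn ?andbT //).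
  + transitivity (pi2 * (p1 * q2 + p2 * q1) / (p1 * q2 + p2 * q1)); first by (field; rewrite ?q1n ?q2n ?Dn ?Kn ?n1 ?n2 ?n3 ?n12 ?Sn ?andbT //).
    rewrite k2; (field; rewrite ?q1n ?q2n ?Dn ?Kn ?n1 ?n2 ?n3 ?n12 ?Sn ?andbT //).
- case=> e1 e2.
  have hS : pi1 + pi2 = pi3 * (1 - q1 * q2) / (q1 * q2).
    by rewrite e1 e2 /q1 /q2; field; rewrite -/q1 -/q2; apply/and3P; split.
  have hS' : S = pi3 / (q1 * q2).
    by rewrite /S hS; (field; rewrite ?q1n ?q2n ?Dn ?Kn ?n1 ?n2 ?n3 ?n12 ?Sn ?andbT //).
  rewrite hS' hS; split.
  + rewrite e1 /q1 /q2; (field; rewrite ?q1n ?q2n ?Dn ?Kn ?n1 ?n2 ?n3 ?n12 ?Sn ?andbT //).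
  + rewrite e2 /q1 /q2; (field; rewrite ?q1n ?q2n ?Dn ?Kn ?n1 ?n2 ?n3 ?n12 ?Sn ?andbT //).
  + rewrite /q1 /q2; (field; rewrite ?q1n ?q2n ?Dn ?Kn ?n1 ?n2 ?n3 ?n12 ?Sn ?andbT //).
Qed.

Theorem mainTheorem9 (R : realFieldType) (p1 p2 : R)
  (hp1 : 0 < p1 < 1) (hp2 : 0 < p2 < 1) :
  let q1 := 1 - p1 in let q2 := 1 - p2 in
  (forall pi1 pi2 pi3 : R, 0 < pi1 -> 0 < pi2 -> 0 < pi3 ->
     (fair p1 p2 pi1 pi2 pi3 <->
      (pi1 = pi3 * (p1 / q1) * ((1 - q1 * q2) / (p1 * q2 + p2 * q1)) /\
       pi2 = pi3 * (p2 / q2) * ((1 - q1 * q2) / (p1 * q2 + p2 * q1)))))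
  /\
  (forall pi1 pi2 pi3 : R,
     ([/\ 0 < pi1, 0 < pi2, 0 < pi3 & fair p1 p2 pi1 pi2 pi3] <->
      [/\ 0 < pi3,
          pi1 = pi3 * (p1 / q1) * ((1 - q1 * q2) / (p1 * q2 + p2 * q1)) &
          pi2 = pi3 * (p2 / q2) * ((1 - q1 * q2) / (p1 * q2 + p2 * q1))])).
Proof.
move=> q1 q2; split.
  by move=> pi1 pi2 pi3 h1 h2 h3; apply: core.
move=> pi1 pi2 pi3; split.
  case=> h1 h2 h3 hf; have [e1 e2] := (@core _ _ _ hp1 hp2 _ _ _ h1 h2 h3).1 hf; by split.
case=> h3 e1 e2.
have /andP [a1 b1] := hp1; have /andP [a2 b2] := hp2.
have q1p : 0 < q1 by rewrite /q1; lra.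
have q2p : 0 < q2 by rewrite /q2; lra.
have Dp : 0 < p1 * q2 + p2 * q1 by nra.
have Kp : 0 < 1 - q1 * q2 by rewrite /q1 /q2; nra.
have h1 : 0 < pi1 by rewrite e1 !mulr_gt0 // ?invr_gt0.
have h2 : 0 < pi2 by rewrite e2 !mulr_gt0 // ?invr_gt0.
split => //; exact: (@core _ _ _ hp1 hp2 _ _ _ h1 h2 h3).2.
Qed.
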